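(* Let $n\ge 3$ and $a<b<c$ be elements of $\mathcal{C}_n$, and let $\triangle=\triangle^{(n)}\{a,b,c\}$. Define the following subsets of $\triangle$ (each described by the triple $(\alpha(a),\alpha(b),\alpha(c))$): $N^{[a]}=\{\alpha\in\triangle:\ \alpha^m=\overline{a}\text{ for some } m\ge1\}$ (equivalently $(\alpha(a),\alpha(b),\alpha(c))\in\{(a,a,a),(a,a,b)\}$); $N^{[b]}=\{\alpha\in\triangle:\ \alpha^m=\overline{b}\text{ for some } m\ge1\}$ (equivalently the triple is $(b,b,b)$); $N^{[c]}=\{\alpha\in\triangle:\ \alpha^m=\overline{c}\text{ for some } m\ge1\}$ (equivalently the triple is $(b,c,c)$ or $(c,c,c)$); $L_{par}=\{\alpha\in\triangle:\ \alpha(a)=a,\ \alpha(b)=\alpha(c)=b\}$; $R_{par}=\{\alpha\in\triangle:\ \alpha(a)=\alpha(b)=b,\ \alpha(c)=c\}$; $L_{\triangle}=\{\alpha\in\triangle:\ \alpha(a)=\alpha(b)=a,\ \alpha(c)=c\}$; $R_{\triangle}=\{\alpha\in\triangle:\ \alpha(a)=a,\ \alpha(b)=\alpha(c)=c\}$; $\mathcal{RI}$ = the set of right identities of $\triangle$. Then each of these eight sets is a subsemiring of $\triangle$, and $\triangle$ is the disjoint union of these eight sets.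
   Context: $\mathcal{C}_n=\{0,1,\dots,n-1\}$ is the chain with its usual order, a join-semilattice with $x\vee y=\max(x,y)$. $\widehat{\mathcal{E}}_{\mathcal{C}_n}$ is the set of all order-preserving maps $\alpha:\mathcal{C}_n\to\mathcal{C}_n$ (not required to fix $0$), a semiring with $(\alpha+\beta)(x)=\max(\alpha(x),\beta(x))$ and $(\alpha\cdot\beta)(x)=\beta(\alpha(x))$ (''first $\alpha$, then $\beta$''); powers $\alpha^m$ are taken with respect to this product. $\overline{x}$ is the constant map with value $x$. The triangle $\triangle^{(n)}\{a,b,c\}$ is the subsemiring of all $\alpha\in\widehat{\mathcal{E}}_{\mathcal{C}_n}$ with image contained in $\{a,b,c\}$. A right identity of $\triangle$ is $e\in\triangle$ with $\alpha\cdot e=\alpha$ for all $\alpha\in\triangle$ (these are exactly the $\alpha\in\triangle$ with $\alpha(a)=a,\alpha(b)=b,\alpha(c)=c$). A subsemiring is a nonempty subset closed under $+$ and $\cdot$. *)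

(* Defs.v *)
From mathcomp Require Import all_boot.
Set Implicit Arguments. Unset Strict Implicit. Unset Printing Implicit Defensive.

(* Maps C_n -> C_n, with C_n = 'I_n ordered by the usual order on nat. *)
Definition emap (n : nat) := {ffun 'I_n -> 'I_n}.

Definition order_pres (n : nat) (al : emap n) : Prop :=
  forall x y : 'I_n, x <= y -> al x <= al y.

Definition eadd (n : nat) (al be : emap n) : emap n :=
  [ffun x => if al x <= be x then be x else al x].

Definition emul (n : nat) (al be : emap n) : emap n :=
  [ffun x => be (al x)].

Definition eid (n : nat) : emap n := [ffun x => x].

Definition epow (n : nat) (al : emap n) (m : nat) : emap n :=
  iter m (fun g => emul g al) (eid n).

Definition ecst (n : nat) (x : 'I_n) : emap n := [ffun => x].

Definition in_triangle (n : nat) (a b c : 'I_n) (al : emap n) : Prop :=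
  order_pres al /\ forall x, al x = a \/ al x = b \/ al x = c.

Definition subsemiring_of_triangle (n : nat) (a b c : 'I_n)
    (S : emap n -> Prop) : Prop :=
  (exists al, S al) /\
  (forall al, S al -> in_triangle a b c al) /\
  (forall al be, S al -> S be -> S (eadd al be)) /\
  (forall al be, S al -> S be -> S (emul al be)).

Definition Npow (n : nat) (a b c : 'I_n) (x : 'I_n) (al : emap n) : Prop :=
  in_triangle a b c al /\ exists m, 0 < m /\ epow al m = ecst x.

Definition Lpar (n : nat) (a b c : 'I_n) (al : emap n) : Prop :=
  in_triangle a b c al /\ al a = a /\ al b = b /\ al c = b.
Definition Rpar (n : nat) (a b c : 'I_n) (al : emap n) : Prop :=
  in_triangle a b c al /\ al a = b /\ al b = b /\ al c = c.
Definition Ltri (n : nat) (a b c : 'I_n) (al : emap n) : Prop :=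
  in_triangle a b c al /\ al a = a /\ al b = a /\ al c = c.
Definition Rtri (n : nat) (a b c : 'I_n) (al : emap n) : Prop :=
  in_triangle a b c al /\ al a = a /\ al b = c /\ al c = c.

Definition RI (n : nat) (a b c : 'I_n) (e : emap n) : Prop :=
  in_triangle a b c e /\
  forall al, in_triangle a b c al -> emul al e = al.

Inductive piece := PNa | PNb | PNc | PLpar | PRpar | PLtri | PRtri | PRI.

Definition piece_set (n : nat) (a b c : 'I_n) (p : piece) : emap n -> Prop :=
  match p with
  | PNa => Npow a b c a
  | PNb => Npow a b c b
  | PNc => Npow a b c c
  | PLpar => Lpar a b c
  | PRpar => Rpar a b c
  | PLtri => Ltri a b c
  | PRtri => Rtri a b c
  | PRI => RI a b c
  end.

(* Main.v *)
Require Import Defs.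
From mathcomp Require Import all_boot zify.
Set Implicit Arguments. Unset Strict Implicit. Unset Printing Implicit Defensive.

Definition trip n (a b c : 'I_n) p (x y z : 'I_n) : bool :=
 match p with
 | PNa => (x==a)&&(y==a)&&((z==a)||(z==b))
 | PNb => (x==b)&&(y==b)&&(z==b)
 | PNc => ((x==b)||(x==c))&&(y==c)&&(z==c)
 | PLpar => (x==a)&&(y==b)&&(z==b)
 | PRpar => (x==b)&&(y==b)&&(z==c)
 | PLtri => (x==a)&&(y==a)&&(z==c)
 | PRtri => (x==a)&&(y==c)&&(z==c)
 | PRI => (x==a)&&(y==b)&&(z==c) end.

Section S.
Variables (n : nat) (a b c : 'I_n).
Hypotheses (hab : a < b) (hbc : b < c).

Let lab : (a <= b) = true. Proof. exact: ltnW. Qed.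
Let lbc : (b <= c) = true. Proof. exact: ltnW. Qed.
Let lac : (a <= c) = true. Proof. exact: ltnW (ltn_trans hab hbc). Qed.
Let lba : (b <= a) = false. Proof. by rewrite leqNgt hab. Qed.
Let lcb : (c <= b) = false. Proof. by rewrite leqNgt hbc. Qed.
Let lca : (c <= a) = false. Proof. by rewrite leqNgt (ltn_trans hab hbc). Qed.
Let eab : (a == b) = false. Proof. by apply/negbTE; rewrite neq_ltn hab. Qed.
Let eba : (b == a) = false. Proof. by apply/negbTE; rewrite neq_ltn hab orbT. Qed.
Let ebc : (b == c) = false. Proof. by apply/negbTE; rewrite neq_ltn hbc. Qed.
Let ecb : (c == b) = false. Proof. by apply/negbTE; rewrite neq_ltn hbc orbT. Qed.
Let eac : (a == c) = false. Proof. by apply/negbTE; rewrite neq_ltn (ltn_trans hab hbc). Qed.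
Let eca : (c == a) = false. Proof. by apply/negbTE; rewrite neq_ltn (ltn_trans hab hbc) orbT. Qed.

Ltac simp := rewrite /= ?leqnn ?eqxx ?lab ?lbc ?lac ?lba ?lcb ?lca ?eab ?eba ?ebc ?ecb ?eac ?eca /= ?eqxx /=.

Lemma tri_elim (al : emap n) (P : 'I_n -> 'I_n -> 'I_n -> Prop) :
  in_triangle a b c al ->
  P a a a -> P a a b -> P a a c -> P a b b -> P a b c -> P a c c ->
  P b b b -> P b b c -> P b c c -> P c c c -> P (al a) (al b) (al c).
Proof.
case=> o f; move: (o a b lab) (o b c lbc).
case: (f a) => [->|[->|->]]; case: (f b) => [->|[->|->]]; case: (f c) => [->|[->|->]]; simp; try done.
Qed.

Lemma tri_eq (al : emap n) (G : Prop) : in_triangle a b c al ->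
  (al a = a -> al b = a -> al c = a -> G) ->
  (al a = a -> al b = a -> al c = b -> G) ->
  (al a = a -> al b = a -> al c = c -> G) ->
  (al a = a -> al b = b -> al c = b -> G) ->
  (al a = a -> al b = b -> al c = c -> G) ->
  (al a = a -> al b = c -> al c = c -> G) ->
  (al a = b -> al b = b -> al c = b -> G) ->
  (al a = b -> al b = b -> al c = c -> G) ->
  (al a = b -> al b = c -> al c = c -> G) ->
  (al a = c -> al b = c -> al c = c -> G) -> G.
Proof.
case=> o f H1 H2 H3 H4 H5 H6 H7 H8 H9 H10; move: (o a b lab) (o b c lbc).
case: (f a) => [Ea|[Ea|Ea]]; case: (f b) => [Eb|[Eb|Eb]]; case: (f c) => [Ec|[Ec|Ec]];
 rewrite Ea Eb Ec; simp; try done; auto.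
Qed.

Ltac dtrip := repeat match goal with
 | H : is_true (_ && _) |- _ => case/andP: H => ? ?
 | H : is_true (_ || _) |- _ => case/orP: H => ?
 | H : is_true (@eq_op _ _ _) |- _ => move/eqP: H => ?
 end.
Ltac rw := repeat match goal with H : ?l = ?r |- context[?l] => rewrite H end.

Definition mk (t1 t2 t3 : 'I_n) : emap n :=
  [ffun y : 'I_n => if y <= a then t1 else if y <= b then t2 else t3].

Lemma mkE (t1 t2 t3 : 'I_n) : [/\ mk t1 t2 t3 a = t1, mk t1 t2 t3 b = t2 & mk t1 t2 t3 c = t3].
Proof. by rewrite /mk !ffunE; simp. Qed.

Definition inabc (t : 'I_n) := t = a \/ t = b \/ t = c.

Lemma mk_tri (t1 t2 t3 : 'I_n) : t1 <= t2 -> t2 <= t3 -> inabc t1 -> inabc t2 -> inabc t3 ->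
  in_triangle a b c (mk t1 t2 t3).
Proof.
move=> h12 h23 i1 i2 i3; split.
  move=> x y xy; rewrite /mk !ffunE.
  by do !case: ifP => ? //; lia.
by move=> x; rewrite /mk !ffunE; do !case: ifP => ? //.
Qed.

Lemma tri_add (al be : emap n) : in_triangle a b c al -> in_triangle a b c be ->
  in_triangle a b c (eadd al be).
Proof.
case=> o f [o' f']; split.
  move=> x y xy; rewrite !ffunE; have := o x y xy; have := o' x y xy.
  by do !case: ifP => ? //; lia.
by move=> x; rewrite !ffunE; case: ifP.
Qed.

Lemma tri_mul (al be : emap n) : in_triangle a b c al -> in_triangle a b c be ->
  in_triangle a b c (emul al be).
Proof.
case=> o f [o' f']; split.
  by move=> x y xy; rewrite !ffunE; apply: o'; apply: o.
by move=> x; rewrite !ffunE.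
Qed.

Lemma tri_cst (x : 'I_n) : inabc x -> in_triangle a b c (ecst x).
Proof. by move=> h; split=> [y z _|y]; rewrite !ffunE. Qed.

Lemma epow_fix (al : emap n) (z : 'I_n) m : al z = z -> epow al m z = z.
Proof.
move=> h; elim: m => [|m IH]; first by rewrite /epow /= ffunE.
by rewrite /epow iterS -/(epow al m) ffunE IH.
Qed.

Lemma Npow_trip (x : 'I_n) (al : emap n) : inabc x -> Npow a b c x al <->
   in_triangle a b c al /\ ((al a == a) ==> (a == x)) && ((al b == b) ==> (b == x))
       && ((al c == c) ==> (c == x)).
Proof.
move=> hx; split.
  case=> t [m [m0 E]]; split=> //.
  have fx z : al z = z -> z = x.
    move=> hz; have := epow_fix m hz; rewrite E ffunE => ->.
    by [].
  by apply/andP; split; [apply/andP; split|]; apply/implyP=> /eqP/fx ->.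
case=> t /andP[/andP[h1 h2] h3]; split=> //; exists 3; split=> //.
apply/ffunP=> y; rewrite /epow /= !ffunE.
have [o f] := t.
move: h1 h2 h3; apply: (tri_eq t) => Ea Eb Ec; rw; simp;
 case: hx => [->|[->|->]]; simp => // _ _ _;
 by case: (f y) => [->|[->|->]]; rw; rw.
Qed.

Lemma inA : inabc a. Proof. by left. Qed.
Lemma inB : inabc b. Proof. by right; left. Qed.
Lemma inC : inabc c. Proof. by right; right. Qed.

Lemma pieceE p (al : emap n) : piece_set a b c p al <->
  in_triangle a b c al /\ trip a b c p (al a) (al b) (al c).
Proof.
case: p => /=.
- eapply iff_trans; [exact: (Npow_trip al inA)|].
  split=> -[t h]; split=> //; move: h; by apply: (tri_eq t) => Ea Eb Ec; rw; simp.
- eapply iff_trans; [exact: (Npow_trip al inB)|].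
  split=> -[t h]; split=> //; move: h; by apply: (tri_eq t) => Ea Eb Ec; rw; simp.
- eapply iff_trans; [exact: (Npow_trip al inC)|].
  split=> -[t h]; split=> //; move: h; by apply: (tri_eq t) => Ea Eb Ec; rw; simp.
- rewrite /Lpar; split=> [[t [e1 [e2 e3]]]|[t h]]; split=> //; [by rw; simp | dtrip; rw; by repeat split].
- rewrite /Rpar; split=> [[t [e1 [e2 e3]]]|[t h]]; split=> //; [by rw; simp | dtrip; rw; by repeat split].
- rewrite /Ltri; split=> [[t [e1 [e2 e3]]]|[t h]]; split=> //; [by rw; simp | dtrip; rw; by repeat split].
- rewrite /Rtri; split=> [[t [e1 [e2 e3]]]|[t h]]; split=> //; [by rw; simp | dtrip; rw; by repeat split].
- rewrite /RI; split=> [[t h]|[t h]]; split=> //.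
    have Ea := congr1 (fun f : emap n => f a) (h _ (tri_cst inA)).
    have Eb := congr1 (fun f : emap n => f a) (h _ (tri_cst inB)).
    have Ec := congr1 (fun f : emap n => f a) (h _ (tri_cst inC)).
    move: Ea Eb Ec; rewrite /= !ffunE => -> -> ->; simp => //.
  dtrip; move=> be [o f]; apply/ffunP=> y; rewrite ffunE.
  by case: (f y) => [->|[->|->]].
Qed.

Lemma main :
  (forall p : piece, subsemiring_of_triangle a b c (piece_set a b c p)) /\
  (forall al : emap n, in_triangle a b c al <->
     exists p : piece, piece_set a b c p al) /\
  (forall (p q : piece) (al : emap n),
     piece_set a b c p al -> piece_set a b c q al -> p = q).
Proof.
split; [|split].
- move=> p; split; [|split; [|split]].
  + case: p; [exists (mk a a a) | exists (mk b b b) | exists (mk c c c)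
      | exists (mk a b b) | exists (mk b b c) | exists (mk a a c)
      | exists (mk a c c) | exists (mk a b c)];
    apply/pieceE; (split; last by rewrite /mk !ffunE; simp);
    apply: mk_tri; simp => //; first [exact: inA | exact: inB | exact: inC].
  + by move=> al /pieceE [].
  + move=> al be /pieceE [t h] /pieceE [t' h']; apply/pieceE; split; first exact: tri_add.
    rewrite !ffunE; move: h h'; by case: p => /= h h'; dtrip; rw; simp.
  + move=> al be /pieceE [t h] /pieceE [t' h']; apply/pieceE; split; first exact: tri_mul.
    rewrite !ffunE; move: h h'; by case: p => /= h h'; dtrip; rw; simp.
- move=> al; split; last by case=> p /pieceE [].
  move=> t; suff [p hp] : exists p, trip a b c p (al a) (al b) (al c).
    by exists p; apply/pieceE.
  apply: (tri_eq t) => Ea Eb Ec; rw;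
  [exists PNa | exists PNa | exists PLtri | exists PLpar | exists PRI | exists PRtri
   | exists PNb | exists PRpar | exists PNc | exists PNc]; by simp.
- move=> p q al /pieceE [t h] /pieceE [_ h']; move: h h'.
  by apply: (tri_eq t) => Ea Eb Ec; rw; case: p; case: q; simp.
Qed.
End S.

Theorem theorem40 (n : nat) (a b c : 'I_n) :
  3 <= n -> a < b -> b < c ->
  (forall p : piece, subsemiring_of_triangle a b c (piece_set a b c p)) /\
  (forall al : emap n, in_triangle a b c al <->
     exists p : piece, piece_set a b c p al) /\
  (forall (p q : piece) (al : emap n),
     piece_set a b c p al -> piece_set a b c q al -> p = q).
Proof. by move=> _ hab hbc; exact: main hab hbc. Qed.
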